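(* Let $G$ be a finite group and $T,T'$ be $G$-transfer systems. If $(T,T')$ is a compatible pair, then $\mathrm{Hull}(T)\subseteq T'$.
   Context: A $G$-transfer system is a partial order $\to$ on the set of subgroups of $G$ such that: $K\to H$ implies $K\le H$; $H\to H$ for all $H$; $L\to K$ and $K\to H$ imply $L\to H$; $K\to H$ implies $K\cap L\to H\cap L$ for every $L\le G$; $K\to H$ implies $gKg^{-1}\to gHg^{-1}$ for all $g\in G$. A transfer system is saturated if whenever $L\le K\le H$ and $L\to H$ is in it, then $K\to H$ is in it; $\mathrm{Hull}(T)$ is the smallest saturated $G$-transfer system containing $T$. A pair $(T,T')$ of $G$-transfer systems is compatible if (1) $T\subseteq T'$, and (2) for all subgroups $A,B,C$ with $B,C\le A$: if $B\to A$ is in $T$ and $B\cap C\to B$ is in $T'$, then $C\to A$ is in $T'$. *)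

(* Defs.v *)
From mathcomp Require Import all_boot all_fingroup.
Set Implicit Arguments. Unset Strict Implicit. Unset Printing Implicit Defensive.
Local Open Scope group_scope.

(* A relation on subgroups of G: R K H means "K -> H". *)
Definition subgrel (gT : finGroupType) := {group gT} -> {group gT} -> Prop.

Definition transfer_system (gT : finGroupType) (G : {group gT}) (R : subgrel gT) : Prop :=
  (forall K H : {group gT}, R K H -> K \subset H /\ H \subset G) /\
  (forall H : {group gT}, H \subset G -> R H H) /\
  (forall L K H : {group gT}, R L K -> R K H -> R L H) /\
  (forall K H : {group gT}, R K H -> R H K -> K = H) /\
  (forall K H L : {group gT}, L \subset G -> R K H -> R (K :&: L)%G (H :&: L)%G) /\
  (forall (K H : {group gT}) (g : gT), g \in G -> R K H -> R (K :^ g)%G (H :^ g)%G).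

Definition saturated (gT : finGroupType) (R : subgrel gT) : Prop :=
  forall L K H : {group gT}, L \subset K -> K \subset H -> R L H -> R K H.

Definition rsub (gT : finGroupType) (R S : subgrel gT) : Prop :=
  forall K H : {group gT}, R K H -> S K H.

Definition hull (gT : finGroupType) (G : {group gT}) (T : subgrel gT) : subgrel gT :=
  fun K H => forall S : subgrel gT,
    transfer_system G S -> saturated S -> rsub T S -> S K H.

Definition compatible (gT : finGroupType) (G : {group gT}) (T T' : subgrel gT) : Prop :=
  rsub T T' /\
  forall A B C : {group gT}, A \subset G -> B \subset A -> C \subset A ->
    T B A -> T' (B :&: C)%G B -> T' C A.

(* Main.v *)
Require Import Defs.
From mathcomp Require Import all_boot all_fingroup.
Set Implicit Arguments. Unset Strict Implicit. Unset Printing Implicit Defensive.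
Local Open Scope group_scope.

Lemma grpI_id (gT : finGroupType) (A B : {group gT}) :
  B \subset A -> (A :&: B)%G = B.
Proof. by move=> h; apply: val_inj => /=; apply/setIidPr. Qed.

Lemma grpI_idl (gT : finGroupType) (A B : {group gT}) :
  A \subset B -> (A :&: B)%G = A.
Proof. by move=> h; apply: val_inj => /=; apply/setIidPl. Qed.

Theorem mainTheorem6 (gT : finGroupType) (G : {group gT}) (T T' : subgrel gT) :
  transfer_system G T -> transfer_system G T' -> compatible G T T' ->
  rsub (hull G T) T'.
Proof.
move=> [Tsub [Trefl [Ttr [Tas [Tres Tconj]]]]] [T'sub [T'refl _]] [TT' Hcomp].
pose S : subgrel gT := fun K H => K \subset H /\ exists2 L : {group gT}, L \subset K & T L H.
have SS : forall K H, S K H -> T' K H.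
  move=> K H [KH [L LK TLH]].
  have [LH HG] := Tsub _ _ TLH.
  apply: (Hcomp H L K HG LH KH TLH).
  rewrite grpI_idl //; apply: T'refl; exact: subset_trans LH HG.
move=> K H hKH; apply: SS; apply: hKH.
- split.
    move=> K0 H0 [KH [L _ TLH]]; split => //; exact: (proj2 (Tsub _ _ TLH)).
  split.
    move=> H0 HG; split => //; exists H0 => //; exact: Trefl.
  split.
    move=> L K0 H0 [LK [L1 L1L T1]] [KH [L2 L2K T2]]; split.
      exact: subset_trans LK KH.
    have [L2H HG] := Tsub _ _ T2.
    have := Tres _ _ L2 (subset_trans L2H HG) T1.
    rewrite (grpI_id L2K) => T3.
    exists (L1 :&: L2)%G; first exact: subset_trans (subsetIl _ _) L1L.
    exact: Ttr T3 T2.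
  split.
    by move=> K0 H0 [h1 _] [h2 _]; apply: val_inj; apply/eqP; rewrite eqEsubset h1 h2.
  split.
    move=> K0 H0 M MG [KH [L LK TLH]]; split; first exact: setSI.
    exists (L :&: M)%G; first exact: setSI.
    exact: Tres.
  move=> K0 H0 g gG [KH [L LK TLH]]; split; first by rewrite conjSg.
  exists (L :^ g)%G; first by rewrite conjSg.
  exact: Tconj.
- move=> L K0 H0 LK KH [_ [L1 L1L T1]]; split => //.
  exists L1 => //; exact: subset_trans L1L LK.
- move=> K0 H0 TKH; split; first exact: (proj1 (Tsub _ _ TKH)).
  by exists K0.
Qed.
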